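(* Let a countable group $G$ act on a set $X$, let $\Phi=(\ell,\phi,\mathcal{Z},\Gamma,\mathcal{H})$ be a chart for $G$, let $0<\epsilon<\tfrac12$, let $A\subseteq\mathbb{Z}^\ell\times\Gamma$ be a rectangle, let $R\subseteq X$ be $(\Phi,\epsilon)$-roughly $A$ at $x\in X^{\mathcal{H}}$, and let $M$ be a positive integer with $(M+2)\cdot A+4\cdot\mathcal{Z}\subseteq\mathrm{dom}(\phi)$. Let $y\in X^{\mathcal{H}}$. (i) If $y=\phi(u)\cdot x$ with $u\in M\cdot A$, then $R$ is $(\Phi,2\epsilon)$-roughly $A-u$ at $y$. (ii) If $x=\phi(v)\cdot y$ with $-v\in M\cdot A$, then $R$ is $(\Phi,2\epsilon)$-roughly $A+v$ at $y$.
   Context: Rectangles: Let $\Gamma$ be a finite additive abelian group with identity $0_\Gamma$ and $\ell\in\mathbb{N}$. Elements $v$ of $\mathbb{R}^\ell\times\Gamma$ have coordinates $v_1,\dots,v_\ell\in\mathbb{R}$, $v_{\ell+1}\in\Gamma$; $\mathbf{0}$ has first $\ell$ coordinates $0$ and last coordinate $0_\Gamma$. For $\lambda\in\mathbb{R}$, $\lambda\cdot v=(\lambda v_1,\dots,\lambda v_\ell,v_{\ell+1})$. For $a\in\mathbb{R}^\ell\times\Gamma$ let $\mathrm{Rec}(a)=\{b\in\mathbb{Z}^\ell\times\Gamma: -|a_i|\le b_i\le|a_i|,\ 1\le i\le\ell\}$. A rectangle is a set $c+\mathrm{Rec}(a)$ with $c,a\in\mathbb{Z}^\ell\times\Gamma$;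 it can be written uniquely with $c\in\mathbb{Z}^\ell\times\{0_\Gamma\}$ (center) and $a\in\mathbb{N}^\ell\times\{0_\Gamma\}$ (radius vector $\mathrm{L}(A)$, entries $\mathrm{L}_i(A)$). Centered means center $\mathbf{0}$. $A\sqsubseteq B$ means $\mathrm{L}_i(A)\le\mathrm{L}_i(B)$ for all $i$. For $\lambda>0$, $\lambda\cdot A=c+\mathrm{Rec}(\lambda\cdot\mathrm{L}(A))$ with $c$ the center of $A$. Sums of sets/vectors are elementwise. Charts: a chart for $G$ is $\Phi=(\ell,\phi,\mathcal{Z},\Gamma,\mathcal{H})$ with $\mathcal{H}$ a finite collection of pairwise conjugate subgroups of $G$, $\Gamma$ finite abelian, $\mathcal{Z}$ a centered rectangle with all $\mathrm{L}_i(\mathcal{Z})>0$, $\phi$ an injective map into $G$ with $\mathrm{dom}(\phi)$ a centered rectangle containing $3\cdot\mathcal{Z}$, $\phi(\mathbf{0})=1_G$, and for all $r,s\in\mathrm{dom}(\phi)$, $H\in\mathcal{H}$: $\phi(r)H=\phi(s)H\Rightarrow r=s$; $r+s+\mathcal{Z}\subseteq\mathrm{dom}(\phi)\Rightarrow\exists z\in\mathcal{Z}:\phi(r)\phi(s)H=\phi(r+s+z)H$; $r-s+\mathcal{Z}\subseteq\mathrm{dom}(\phi)\Rightarrow\exists z\in\mathcal{Z}:\phi(r)\phi(s)^{-1}H=\phi(r-s+z)H$; $-r+s+\mathcal{Z}\subseteq\mathrm{dom}(\phi)\Rightarrow\exists z\in\mathcal{Z}:\phi(r)^{-1}\phi(s)H=\phi(-r+s+z)H$;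 $-s+\mathcal{Z}\subseteq\mathrm{dom}(\phi)\Rightarrow\exists z\in\mathcal{Z}:\phi(s)^{-1}H=\phi(-s+z)H$. For $S\subseteq\mathrm{dom}(\phi)$, $\phi(S)\cdot x=\{\phi(s)\cdot x:s\in S\}$. $X^{\mathcal{H}}=\{x\in X:\mathrm{Stab}(x)\in\mathcal{H}\}$. Rough rectangles: for a rectangle $A$ with $2\cdot A\subseteq\mathrm{dom}(\phi)$, $x\in X^{\mathcal{H}}$ and $0<\epsilon<1$, a set $R\subseteq X$ is $(\Phi,\epsilon)$-roughly $A$ at $x$ if $2\cdot\mathcal{Z}\sqsubseteq\epsilon\cdot A$ and $\phi((1-\epsilon)\cdot A)\cdot x\subseteq R\subseteq\phi((1+\epsilon)\cdot A)\cdot x$. *)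

(* Defs.v *)
From HB Require Import structures.
From mathcomp Require Import all_boot all_order all_algebra.
From mathcomp Require Import reals.
Set Implicit Arguments. Unset Strict Implicit. Unset Printing Implicit Defensive.
Import Order.TTheory GRing.Theory Num.Theory.
Local Open Scope ring_scope.

Record group_on (G : Type) := GroupOn {
  gmul : G -> G -> G;
  ginv : G -> G;
  gone : G;
  gmulA : forall a b c, gmul a (gmul b c) = gmul (gmul a b) c;
  gmul1 : forall a, gmul gone a = a;
  gmulV : forall a, gmul (ginv a) a = gone }.

Definition countable_type (G : Type) := exists f : G -> nat, injective f.

Record action_on (G : Type) (gG : group_on G) (X : Type) := ActionOn {
  act : G -> X -> X;
  act1 : forall x, act (gone gG) x = x;
  actM : forall g h x, act (gmul gG g h) x = act g (act h x) }.

Definition is_subgroup G (gG : group_on G) (H : G -> Prop) :=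
  [/\ H (gone gG), (forall a b, H a -> H b -> H (gmul gG a b))
    & (forall a, H a -> H (ginv gG a))].

Definition conjugate_subgroups G (gG : group_on G) (H K : G -> Prop) :=
  exists g, forall k, K k <-> H (gmul gG g (gmul gG k (ginv gG g))).

Definition coset_eq G (gG : group_on G) (H : G -> Prop) (a b : G) :=
  H (gmul gG (ginv gG b) a).

Definition stabilizer G (gG : group_on G) X (ac : action_on gG X) (x : X) :=
  fun g => act ac g x = x.

Notation vec l Gam := ({ffun 'I_l -> int} * Gam)%type.

(** A rectangle c + Rec(a), written uniquely with center c in Z^l x {0}
    and radius vector L(A) in N^l x {0}. *)
Record rect (l : nat) := Rect { rc : {ffun 'I_l -> int}; rL : 'I_l -> nat }.

(** the set  lam . A = c + Rec(lam . L(A))  (for lam = 1 this is A itself) *)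
Definition scaled_set (R : realType) l (Gam : finZmodType) (lam : R) (A : rect l)
  : vec l Gam -> Prop :=
  fun b => forall i, ((`|b.1 i - rc A i|)%:~R : R) <= `|lam * (rL A i)%:R|.

Definition rect_set l (Gam : finZmodType) (A : rect l) : vec l Gam -> Prop :=
  fun b => forall i, `|b.1 i - rc A i| <= (rL A i)%:Z.

Definition rect_shift l (Gam : finZmodType) (A : rect l) (w : vec l Gam) : rect l :=
  Rect (rc A + w.1) (rL A).

Definition centered_rect l (L : 'I_l -> nat) : rect l := Rect 0 L.

Record chart (G : Type) (l : nat) (Gam : finZmodType) := Chart {
  phi : vec l Gam -> G;
  LZ : 'I_l -> nat;        (* radius vector of the centered rectangle Z *)
  Ldom : 'I_l -> nat;      (* radius vector of the centered rectangle dom(phi) *)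
  nH : nat;
  Hs : 'I_nH -> (G -> Prop) }.
Arguments Hs {G l Gam} c _ _.

Section ChartDefs.
Variables (G : Type) (gG : group_on G) (l : nat) (Gam : finZmodType).
Variable (Ch : chart G l Gam).

Definition Zset : vec l Gam -> Prop := rect_set (centered_rect (LZ Ch)).
Definition domset : vec l Gam -> Prop := rect_set (centered_rect (Ldom Ch)).

Definition is_chart :=
  [/\ (forall j, is_subgroup gG (Hs Ch j)),
      (forall j k, conjugate_subgroups gG (Hs Ch j) (Hs Ch k)),
      (forall i, (0 < LZ Ch i)%N),
      (forall i, (3 * LZ Ch i <= Ldom Ch i)%N)
    & [/\ (forall r s, domset r -> domset s -> phi Ch r = phi Ch s -> r = s),
      phi Ch 0 = gone gG
    & forall r s j, domset r -> domset s ->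
      let H := Hs Ch j in
      let ph := phi Ch in
      [/\ coset_eq gG H (ph r) (ph s) -> r = s,
          (forall z, Zset z -> domset (r + s + z)) ->
            exists2 z, Zset z &
              coset_eq gG H (gmul gG (ph r) (ph s)) (ph (r + s + z)),
          (forall z, Zset z -> domset (r - s + z)) ->
            exists2 z, Zset z &
              coset_eq gG H (gmul gG (ph r) (ginv gG (ph s))) (ph (r - s + z)),
          (forall z, Zset z -> domset (- r + s + z)) ->
            exists2 z, Zset z &
              coset_eq gG H (gmul gG (ginv gG (ph r)) (ph s)) (ph (- r + s + z))
        & (forall z, Zset z -> domset (- s + z)) ->
            exists2 z, Zset z &
              coset_eq gG H (ginv gG (ph s)) (ph (- s + z))]]].

Variables (X : Type) (ac : action_on gG X).

Definition in_XH (x : X) :=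
  exists j, forall g, stabilizer ac x g <-> Hs Ch j g.

Definition img_act (S : vec l Gam -> Prop) (x : X) : X -> Prop :=
  fun y => exists2 s, S s & y = act ac (phi Ch s) x.

(** R is (Phi, eps)-roughly A at x (including the standing requirements
    2.A in dom(phi), x in X^H, 0 < eps < 1). *)
Definition roughly (R : realType) (A : rect l) (x : X) (eps : R) (Rs : X -> Prop) :=
  [/\ (forall b, scaled_set (2 : R) A b -> domset b),
      in_XH x,
      0 < eps < 1,
      (forall i, ((2 * LZ Ch i)%N%:R : R) <= eps * (rL A i)%:R)
    & (forall y, img_act (scaled_set (1 - eps) A) x y -> Rs y)
      /\ (forall y, Rs y -> img_act (scaled_set (1 + eps) A) x y)].

End ChartDefs.

(* Main.v *)
Require Import Defs.
From HB Require Import structures.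
From mathcomp Require Import all_boot all_order all_algebra.
From mathcomp Require Import reals lra.
Import Order.TTheory GRing.Theory Num.Theory.
Local Open Scope ring_scope.

Lemma gmulVr_ G (gG : group_on G) a : gmul gG a (ginv gG a) = gone gG.
Proof.
have e : gmul gG (ginv gG (ginv gG a)) (ginv gG a) = gone gG by rewrite gmulV.
rewrite -{1}(gmul1 gG (gmul gG a (ginv gG a))) -{1}e.
rewrite -gmulA (gmulA gG (ginv gG a)) gmulV gmul1. exact: e.
Qed.

Lemma coset_act G (gG : group_on G) X (ac : action_on gG X) (H : G -> Prop) x a b :
  (forall g, stabilizer ac x g <-> H g) -> coset_eq gG H a b ->
  act ac a x = act ac b x.
Proof.
move=> hH /hH hst; rewrite /stabilizer in hst.
have -> : a = gmul gG b (gmul gG (ginv gG b) a) by rewrite gmulA gmulVr_ gmul1.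
by rewrite actM hst.
Qed.

Lemma scaledP (R : realType) l (Gam : finZmodType) (lam : R) (A : rect l) (b : vec l Gam) :
  0 <= lam -> scaled_set lam A b <->
  forall i, - (lam * (rL A i)%:R) <= (b.1 i)%:~R - (rc A i)%:~R <= lam * (rL A i)%:R.
Proof.
move=> hl; rewrite /scaled_set; split => h i; move: (h i);
by rewrite intr_norm intrB [`|lam * _|]ger0_norm ?mulr_ge0 // ler_norml.
Qed.

Lemma rectP (R : realType) l (Gam : finZmodType) (L : 'I_l -> nat) (b : vec l Gam) :
  rect_set (centered_rect L) b <->
  forall i, - ((L i)%:R : R) <= (b.1 i)%:~R <= ((L i)%:R : R).
Proof.
rewrite /rect_set /=; split => h i; move: (h i); rewrite ffunE subr0.
  by rewrite -(ler_int R) intr_norm ler_norml -pmulrn.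
by rewrite -(ler_int R) intr_norm ler_norml -pmulrn.
Qed.

Arguments coset_act {G gG X ac H x a b}.
Arguments scaledP {R l Gam lam A b}.
Arguments rectP R {l Gam L b}.

Lemma domP (R : realType) G l (Gam : finZmodType) (Ch : chart G l Gam) (b : vec l Gam) :
  domset Ch b <-> forall i, - ((Ldom Ch i)%:R : R) <= (b.1 i)%:~R <= ((Ldom Ch i)%:R : R).
Proof. exact: rectP. Qed.

Lemma ZP (R : realType) G l (Gam : finZmodType) (Ch : chart G l Gam) (b : vec l Gam) :
  Zset Ch b <-> forall i, - ((LZ Ch i)%:R : R) <= (b.1 i)%:~R <= ((LZ Ch i)%:R : R).
Proof. exact: rectP. Qed.

Arguments domP R {G l Gam Ch b}.
Arguments ZP R {G l Gam Ch b}.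

Ltac crd := rewrite /= ?ffunE ?intrD ?intrN ?intrB.
Ltac fin := intros;
  repeat match goal with H : is_true (_ && _) |- _ => case/andP: H => ?? end;
  repeat match goal with H : _ /\ _ |- _ => destruct H end;
  try (apply/andP; split); lra.

Theorem lemma5p2 (R : realType) (G : Type) (gG : group_on G)
  (Gcount : countable_type G) (X : Type) (ac : action_on gG X)
  (l : nat) (Gam : finZmodType) (Ch : chart G l Gam) (hCh : is_chart gG Ch)
  (eps : R) (heps0 : 0 < eps) (heps1 : eps < 1 / 2)
  (A : rect l) (Rs : X -> Prop) (x : X)
  (hR : roughly Ch ac A x eps Rs)
  (M : nat) (hM : (0 < M)%N)
  (hdom : forall a z, scaled_set ((M + 2)%N%:R : R) A a -> scaled_set (4 : R) (centered_rect (LZ Ch)) z ->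
            domset Ch (a + z : vec l Gam))
  (y : X) (hy : in_XH Ch ac y) :
  (forall u : vec l Gam, scaled_set (M%:R : R) A u -> y = act ac (phi Ch u) x ->
     roughly Ch ac (rect_shift A (- u)) y (2 * eps) Rs) /\
  (forall v : vec l Gam, scaled_set (M%:R : R) A (- v) -> x = act ac (phi Ch v) y ->
     roughly Ch ac (rect_shift A v) y (2 * eps) Rs).
Proof.
have [_ _ _ _ [_ _ hch]] := hCh.
case: hR => _ [jx hjx] _ hZ [hin hout].
case: (hy) => jy hjy.
have hF : forall i, 0 <= ((rL A i)%:R : R) /\ 0 <= ((LZ Ch i)%:R : R) /\
   2 * ((LZ Ch i)%:R : R) <= eps * (rL A i)%:R /\ 0 <= eps * (rL A i)%:R /\
   2 * (eps * (rL A i)%:R) <= (rL A i)%:R /\ 0 <= M%:R * ((rL A i)%:R : R).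
  move=> i; have := hZ i; rewrite natrM => h2.
  have h3 : (2 * eps) * (rL A i)%:R <= 1 * ((rL A i)%:R : R).
    by apply: ler_wpM2r => //; lra.
  have h4 : 0 <= eps * ((rL A i)%:R : R) by apply: mulr_ge0 => //; lra.
  have := ler0n R (rL A i); have := ler0n R (LZ Ch i).
  have := mulr_ge0 (ler0n R M) (ler0n R (rL A i)).
  fin.
have hD : forall i, ((rc A i)%:~R : R) + (M%:R + 2) * (rL A i)%:R <= (Ldom Ch i)%:R /\
   - ((rc A i)%:~R : R) + (M%:R + 2) * (rL A i)%:R <= (Ldom Ch i)%:R.
  move=> i.
  pose k j := ((M + 2) * rL A j)%N%:Z.
  pose a : vec l Gam := ([ffun j => if 0 <= rc A j then rc A j + k j else rc A j - k j], 0).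
  have ha : scaled_set ((M + 2)%N%:R : R) A a.
    apply/scaledP => // j; crd; rewrite /k.
    case: ifP => _; crd; rewrite -pmulrn natrM; have := hF j; fin.
  have hz0 : scaled_set (4 : R) (centered_rect (LZ Ch)) (0 : vec l Gam).
    apply/scaledP => // j; crd; rewrite subr0; have := hF j; fin.
  have := hdom _ _ ha hz0; rewrite addr0 => /(domP R) /(_ i); crd.
  case: ifP => hc; crd; rewrite /k -pmulrn natrM natrD;
  move: hc; rewrite -(ler0z R) => hc; have := hF i.
    fin.
  fin.
have two0 : (0 : R) <= 2 by lra.
have hM0 := ler0n R M.
have h12 : 0 <= 1 - 2 * eps by lra.
have h1e : 0 <= 1 - eps by lra.
have h1e' : 0 <= 1 + eps by lra.
have h12' : 0 <= 1 + 2 * eps by lra.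
have hxinv : forall g z, act ac (ginv gG g) (act ac g z) = z.
  by move=> g z; rewrite -actM gmulV act1.
split.
- move=> u /(scaledP hM0) hu hyu.
  have hx : x = act ac (ginv gG (phi Ch u)) y by rewrite hyu hxinv.
  have du : domset Ch u.
    apply/(domP R) => i; have := hu i; have := hD i; have := hF i; crd; fin.
  split.
  + move=> b /(scaledP two0) hb; apply/(domP R) => i.
    have := hb i; have := hu i; have := hD i; have := hF i; crd; fin.
  + exact: hy.
  + apply/andP; split; lra.
  + move=> i /=; have := hF i; rewrite natrM; fin.
  split.
  + move=> w [s /(scaledP h12) hs ->].
    have ds : domset Ch s.
      apply/(domP R) => i; have := hs i; have := hu i; have := hD i; have := hF i; crd; fin.
    have [_ hsum _ _ _] := hch s u jx ds du.
    have [z /(ZP R) hz hc] : exists2 z, Zset Ch z &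
        coset_eq gG (Hs Ch jx) (gmul gG (phi Ch s) (phi Ch u)) (phi Ch (s + u + z)).
      apply: hsum => z /(ZP R) hz; apply/(domP R) => i.
      have := hs i; have := hu i; have := hz i; have := hD i; have := hF i; crd; fin.
    rewrite hyu -actM (coset_act hjx hc); apply: hin; exists (s + u + z) => //.
    apply/(scaledP h1e) => i.
    have := hs i; have := hu i; have := hz i; have := hD i; have := hF i; crd; fin.
  + move=> w /hout [t /(scaledP h1e') ht ->].
    have dt : domset Ch t.
      apply/(domP R) => i; have := ht i; have := hD i; have := hF i; crd; fin.
    have [_ _ hdif _ _] := hch t u jy dt du.
    have [z /(ZP R) hz hc] : exists2 z, Zset Ch z &
        coset_eq gG (Hs Ch jy) (gmul gG (phi Ch t) (ginv gG (phi Ch u))) (phi Ch (t - u + z)).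
      apply: hdif => z /(ZP R) hz; apply/(domP R) => i.
      have := ht i; have := hu i; have := hz i; have := hD i; have := hF i; crd; fin.
    rewrite hx -actM (coset_act hjy hc); exists (t - u + z) => //.
    apply/(scaledP h12') => i.
    have := ht i; have := hu i; have := hz i; have := hD i; have := hF i; crd; fin.
- move=> v /(scaledP hM0) hv hxv.
  have hyv : y = act ac (ginv gG (phi Ch v)) x by rewrite hxv hxinv.
  have dv : domset Ch v.
    apply/(domP R) => i; have := hv i; have := hD i; have := hF i; crd; fin.
  split.
  + move=> b /(scaledP two0) hb; apply/(domP R) => i.
    have := hb i; have := hv i; have := hD i; have := hF i; crd; fin.
  + exact: hy.
  + apply/andP; split; lra.
  + move=> i /=; have := hF i; rewrite natrM; fin.
  split.
  + move=> w [s /(scaledP h12) hs ->].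
    have ds : domset Ch s.
      apply/(domP R) => i; have := hs i; have := hv i; have := hD i; have := hF i; crd; fin.
    have [_ _ hdif _ _] := hch s v jx ds dv.
    have [z /(ZP R) hz hc] : exists2 z, Zset Ch z &
        coset_eq gG (Hs Ch jx) (gmul gG (phi Ch s) (ginv gG (phi Ch v))) (phi Ch (s - v + z)).
      apply: hdif => z /(ZP R) hz; apply/(domP R) => i.
      have := hs i; have := hv i; have := hz i; have := hD i; have := hF i; crd; fin.
    rewrite hyv -actM (coset_act hjx hc); apply: hin; exists (s - v + z) => //.
    apply/(scaledP h1e) => i.
    have := hs i; have := hv i; have := hz i; have := hD i; have := hF i; crd; fin.
  + move=> w /hout [t /(scaledP h1e') ht ->].
    have dt : domset Ch t.
      apply/(domP R) => i; have := ht i; have := hD i; have := hF i; crd; fin.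
    have [_ hsum _ _ _] := hch t v jy dt dv.
    have [z /(ZP R) hz hc] : exists2 z, Zset Ch z &
        coset_eq gG (Hs Ch jy) (gmul gG (phi Ch t) (phi Ch v)) (phi Ch (t + v + z)).
      apply: hsum => z /(ZP R) hz; apply/(domP R) => i.
      have := ht i; have := hv i; have := hz i; have := hD i; have := hF i; crd; fin.
    rewrite hxv -actM (coset_act hjy hc); exists (t + v + z) => //.
    apply/(scaledP h12') => i.
    have := ht i; have := hv i; have := hz i; have := hD i; have := hF i; crd; fin.
Qed.
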